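(* Let $a:[0,1]\to[0,\infty)$ be bounded and measurable and $N\ge1$. The matrix $M_h^{-1}(K_h+L_h)$ has $N$ simple, positive, real eigenvalues $(\mu_h^n)_{1\le n\le N}$, and corresponding eigenvectors $(\Psi_h^n)_{1\le n\le N}\subset\mathbb{R}^N$ can be chosen to form an orthonormal basis of $\mathbb{C}^N$ with respect to the inner product $\langle U,W\rangle_M=\langle M_hU,W\rangle$.
   Context: $h=1/(N+1)$, $x_j=jh$, $a_j=a(x_j)$; $K_h=\frac1h\mathrm{tridiag}(-1,2,-1)$, $M_h=\frac h4\mathrm{tridiag}(1,2,1)$, $L_h=h\,\mathrm{diag}(a_1,\dots,a_N)$ ($N\times N$ real matrices); $\langle U,W\rangle=\sum_j u_j\overline{w_j}$ on $\mathbb{C}^N$. *)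

(* Defs.v *)
From HB Require Import structures.
From mathcomp Require Import all_boot all_order all_algebra.
From mathcomp Require Import all_classical all_reals all_analysis.
From mathcomp Require Import complex.
Set Implicit Arguments. Unset Strict Implicit. Unset Printing Implicit Defensive.
Import Order.TTheory GRing.Theory Num.Theory.
Local Open Scope ring_scope.

Section FEM.
Variables (R : realType) (N : nat).

(* mesh size h = 1/(N+1); the index i : 'I_N stands for the paper's j = i+1 *)
Definition hstep : R := (N.+1%:R)^-1.
Definition node (i : 'I_N) : R := (i.+1)%:R * hstep.

Definition adjacent (i j : 'I_N) : bool := (i.+1 == j :> nat) || (j.+1 == i :> nat).

Definition Kh : 'M[R]_N :=
  \matrix_(i, j) (hstep^-1 * (if i == j then 2 else if adjacent i j then -1 else 0)).
Definition Mh : 'M[R]_N :=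
  \matrix_(i, j) (hstep / 4 * (if i == j then 2 else if adjacent i j then 1 else 0)).
Definition Lh (a : R -> R) : 'M[R]_N :=
  \matrix_(i, j) (if i == j then hstep * a (node i) else 0).

Definition Ah (a : R -> R) : 'M[R]_N := invmx Mh *m (Kh + Lh a).

Definition cplx (x : R) : R[i] := (x%:C)%C.
Definition toC (U : 'cV[R]_N) : 'cV[R[i]]_N := map_mx cplx U.

Definition cdot (U W : 'cV[R[i]]_N) : R[i] := \sum_j U j 0 * conjc (W j 0).
Definition Mdot (U W : 'cV[R[i]]_N) : R[i] := cdot (map_mx cplx Mh *m U) W.

End FEM.

(* Main.v *)
From Pilot Require Import Defs.
From HB Require Import structures.
From mathcomp Require Import all_boot all_order all_algebra.
From mathcomp Require Import all_classical all_reals all_analysis.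
From mathcomp Require Import complex.
From mathcomp Require Import ring lra.
Set Implicit Arguments. Unset Strict Implicit. Unset Printing Implicit Defensive.
Import Order.TTheory GRing.Theory Num.Theory.
Local Open Scope classical_set_scope.
Local Open Scope ring_scope.
Section Quad.
Variable R : realType.

Definition ext m (x : 'cV[R]_m) (k : nat) : R :=
  if insub k is Some i then x i 0 else 0.
Definition ysh m (x : 'cV[R]_m) (k : nat) : R := if k is k'.+1 then ext x k' else 0.

Lemma ext_ord m (x : 'cV[R]_m) (i : 'I_m) : ext x i = x i 0.
Proof. by rewrite /ext valK. Qed.

Lemma ext_out m (x : 'cV[R]_m) k : (m <= k)%N -> ext x k = 0.
Proof. by move=> h; rewrite /ext insubF // ltnNge h. Qed.

Lemma sum_pick m (x : 'cV[R]_m) (k : nat) :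
  \sum_(j < m) (if k == j :> nat then x j 0 else 0) = ext x k.
Proof.
case: (ltnP k m) => hk.
  rewrite (bigD1 (Ordinal hk)) //= eqxx big1 ?addr0; first by rewrite -(ext_ord x (Ordinal hk)).
  move=> j hj; case: eqP => // e; move: hj.
  by rewrite -(inj_eq val_inj) /= e eqxx.
rewrite ext_out // big1 // => j _; case: eqP => // e.
by have := ltn_ord j; rewrite -e ltnNge hk.
Qed.

Lemma sum_pick2 m (x : 'cV[R]_m) (i : nat) :
  \sum_(j < m) (if j.+1 == i :> nat then x j 0 else 0) = ysh x i.
Proof.
case: i => [|i] /=.
  by rewrite big1 // => j _.
rewrite -sum_pick; apply: eq_bigr => j _.
by rewrite eqSS eq_sym.
Qed.

Definition tri (F : pzRingType) {m : nat} (al be : F) : 'M[F]_m :=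
  \matrix_(i, j) (if i == j then al else if Pilot.Defs.adjacent i j then be else 0).

Lemma tri_entry (F : pzRingType) m (al be : F) (i j : 'I_m) (u : F) :
  (if i == j then al else if Pilot.Defs.adjacent i j then be else 0) * u =
  al * (if i == j :> nat then u else 0) + be * (if i.+1 == j :> nat then u else 0)
  + be * (if j.+1 == i :> nat then u else 0).
Proof.
rewrite /Pilot.Defs.adjacent -(inj_eq val_inj) /=.
case: (ltngtP i j) => h.
- rewrite (gtn_eqF (ltnW h : (i < j.+1)%N)) /= orbF.
  by case: eqP => _; rewrite /= ?mulr0 ?add0r ?addr0 ?mul0r.
- rewrite (gtn_eqF (ltnW h : (j < i.+1)%N)) /=.
  by case: eqP => _; rewrite /= ?mulr0 ?add0r ?addr0 ?mul0r.
- rewrite h (gtn_eqF (ltnSn _)) /=.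
  by rewrite !mulr0 !addr0.
Qed.

Lemma row_tri (F : pzRingType) m (al be : F) (x : 'cV[F]_m) (i : 'I_m) :
  (tri al be *m x) i 0 = al * x i 0 + be * (\sum_(j < m) (if i.+1 == j :> nat then x j 0 else 0))
     + be * (\sum_(j < m) (if j.+1 == i :> nat then x j 0 else 0)).
Proof.
rewrite mxE.
under eq_bigr do rewrite mxE tri_entry.
rewrite !big_split /= -!mulr_sumr; congr (_ * _ + _ + _).
rewrite (bigD1 i) //= eqxx big1 ?addr0 // => j hj.
by move: hj; rewrite -(inj_eq val_inj) eq_sym => /negbTE ->.
Qed.

Lemma qf_tri m (x : 'cV[R]_m) (s : R) : s ^+ 2 = 1 ->
  (x^T *m (tri 2 s *m x)) 0 0 = \sum_(k < m.+1) (ysh x k + s * ysh x k.+1) ^+ 2.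
Proof.
move=> s2.
rewrite mxE.
under eq_bigr do rewrite mxE row_tri sum_pick sum_pick2 -ext_ord.
rewrite -(big_mkord xpredT (fun i => ext x i * (2 * ext x i + s * ext x i.+1 + s * ysh x i))).
rewrite -(big_mkord xpredT (fun k => (ysh x k + s * ysh x k.+1) ^+ 2)).
have e1 : forall k, (ysh x k + s * ysh x k.+1) ^+ 2 =
   ysh x k ^+ 2 + ysh x k.+1 ^+ 2 + 2 * s * (ysh x k * ysh x k.+1).
  move=> k; rewrite sqrrD exprMn s2 mul1r; ring.
rewrite [in RHS](eq_bigr _ (fun k _ => e1 k)).
rewrite !big_split /= -mulr_sumr.
have S1 : \sum_(0 <= k < m.+1) ysh x k ^+ 2 = \sum_(0 <= i < m) ext x i ^+ 2.
  by rewrite big_nat_recl //= expr0n /= add0r.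
have S2 : \sum_(0 <= k < m.+1) ysh x k.+1 ^+ 2 = \sum_(0 <= i < m) ext x i ^+ 2.
  by rewrite big_nat_recr //= ext_out // expr0n /= addr0.
have S3 : \sum_(0 <= k < m.+1) ysh x k * ysh x k.+1 = \sum_(0 <= i < m) ext x i * ext x i.+1.
  by rewrite big_nat_recl //= mul0r add0r.
have S4 : \sum_(0 <= k < m.+1) ysh x k * ysh x k.+1 = \sum_(0 <= i < m) ysh x i * ext x i.
  by rewrite big_nat_recr //= ext_out // mulr0 addr0.
have -> : 2 * s * \sum_(0 <= k < m.+1) ysh x k * ysh x k.+1 =
   s * \sum_(0 <= i < m) ext x i * ext x i.+1 + s * \sum_(0 <= i < m) ysh x i * ext x i.
  rewrite -S3 -S4; ring.
rewrite S1 S2.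
under eq_bigr do rewrite !mulrDr.
rewrite !big_split /=.
have -> : \sum_(0 <= i < m) ext x i * (s * ext x i.+1) = s * \sum_(0 <= i < m) ext x i * ext x i.+1.
  by rewrite mulr_sumr; apply: eq_bigr => i _; ring.
have -> : \sum_(0 <= i < m) ext x i * (s * ysh x i) = s * \sum_(0 <= i < m) ysh x i * ext x i.
  by rewrite mulr_sumr; apply: eq_bigr => i _; ring.
have -> : \sum_(0 <= i < m) ext x i * (2 * ext x i) = 2 * \sum_(0 <= i < m) ext x i ^+ 2.
  by rewrite mulr_sumr; apply: eq_bigr => i _; ring.
ring.
Qed.

End Quad.
Section Pos.
Variable R : realType.

Lemma qf_tri_pos m (x : 'cV[R]_m) (s : R) : s ^+ 2 = 1 -> x != 0 ->
  0 < (x^T *m (tri 2 s *m x)) 0 0.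
Proof.
move=> s2 xn0; rewrite qf_tri // lt_def sumr_ge0 ?andbT; last by move=> k _; rewrite sqr_ge0.
apply: contra xn0 => /eqP S0.
have T0 : forall k : 'I_m.+1, ysh x k + s * ysh x k.+1 = 0.
  move=> k; apply/eqP; rewrite -sqrf_eq0; apply/eqP.
  by apply: (psumr_eq0P _ S0) => // i _; rewrite sqr_ge0.
have sn0 : s != 0.
  by apply/eqP => s0; move: s2; rewrite s0 expr0n /= => /eqP; rewrite eq_sym oner_eq0.
have Y : forall k, (k <= m)%N -> ysh x k = 0.
  elim=> [//|k IH] hk.
  have := T0 (Ordinal (ltnW hk : (k < m.+1)%N)); rewrite /= IH ?(ltnW hk) // add0r.
  by move/eqP; rewrite mulf_eq0 (negbTE sn0) /= => /eqP.
apply/eqP/matrixP => i j; rewrite ord1 mxE -ext_ord.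
exact: (Y i.+1 (ltn_ord i)).
Qed.

Lemma sq_pos m (x : 'cV[R]_m) : x != 0 -> 0 < (x^T *m x) 0 0.
Proof.
move=> xn0; rewrite mxE lt_def sumr_ge0 ?andbT; last first.
  by move=> k _; rewrite mxE -expr2 sqr_ge0.
apply: contra xn0 => /eqP S0.
apply/eqP/matrixP => i j; rewrite ord1 mxE.
have H : forall k : 'I_m, true -> 0 <= x^T 0 k * x k 0.
  by move=> k _; rewrite mxE -expr2 sqr_ge0.
have := psumr_eq0P H S0 (i := i) isT; rewrite mxE -expr2.
by move/eqP; rewrite sqrf_eq0 => /eqP.
Qed.

Lemma tri_sym (F : pzRingType) m (al be : F) : (@tri F m al be)^T = tri al be.
Proof.
by apply/matrixP => i j; rewrite !mxE eq_sym /Pilot.Defs.adjacent orbC.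
Qed.

End Pos.

Section FEM2.
Variables (R : realType) (m : nat) (a : R -> R).
Hypothesis apos : forall x : R, 0 <= x <= 1 -> 0 <= a x.

Local Notation h := (hstep R m).
Local Notation B := (Kh R m + Lh m a).
Local Notation M := (Mh R m).
Local Notation A := (Ah m a).

Lemma h_gt0 : 0 < h.
Proof. by rewrite /hstep invr_gt0 ltr0n. Qed.

Lemma KhE : Kh R m = h^-1 *: tri 2 (-1).
Proof. by apply/matrixP => i j; rewrite !mxE. Qed.

Lemma MhE : M = (h / 4) *: tri 2 1.
Proof. by apply/matrixP => i j; rewrite !mxE. Qed.

Lemma node01 (i : 'I_m) : 0 <= node R i <= 1.
Proof.
rewrite /node /hstep; apply/andP; split.
  by rewrite mulr_ge0 // invr_ge0 ler0n.
rewrite ler_pdivrMr ?ltr0n // mul1r ler_nat.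
exact: (ltnW (ltn_ord i)).
Qed.

Lemma qL (x : 'cV[R]_m) : 0 <= (x^T *m (Lh m a *m x)) 0 0.
Proof.
rewrite mxE; apply: sumr_ge0 => i _; rewrite !mxE (bigD1 i) //= big1.
  rewrite !mxE eqxx addr0 mulrCA -expr2 mulr_ge0 ?sqr_ge0 //.
  by rewrite mulr_ge0 ?(ltW h_gt0) // apos // node01.
by move=> j hj; rewrite !mxE eq_sym (negbTE hj) mul0r.
Qed.

Lemma qM_pos (x : 'cV[R]_m) : x != 0 -> 0 < (x^T *m (M *m x)) 0 0.
Proof.
move=> xn0; rewrite MhE -scalemxAl -scalemxAr mxE mulr_gt0 //.
  by rewrite divr_gt0 ?h_gt0 ?ltr0n.
by apply: qf_tri_pos => //; rewrite expr1n.
Qed.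

Lemma qB_pos (x : 'cV[R]_m) : x != 0 -> 0 < (x^T *m (B *m x)) 0 0.
Proof.
move=> xn0; rewrite mulmxDl mulmxDr mxE ltr_wpDr ?qL //.
rewrite KhE -scalemxAl -scalemxAr mxE mulr_gt0 //.
  by rewrite invr_gt0 h_gt0.
by apply: qf_tri_pos => //; rewrite sqrrN expr1n.
Qed.

Lemma M_sym : M^T = M.
Proof. by apply/matrixP => i j; rewrite !mxE eq_sym /Pilot.Defs.adjacent orbC. Qed.

Lemma B_sym : B^T = B.
Proof.
apply/matrixP => i j; rewrite !mxE eq_sym /Pilot.Defs.adjacent orbC.
by case: eqP => // ->.
Qed.

Lemma M_unit : M \in unitmx.
Proof.
rewrite unitmxE unitfE; apply/negP => /det0P [v vn0 vM].
have : v^T != 0 by apply: contra vn0 => /eqP/(congr1 trmx); rewrite trmxK trmx0 => ->.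
move/qM_pos; have -> : M *m v^T = 0 by rewrite -[M]M_sym -trmx_mul vM trmx0.
by rewrite mulmx0 mxE ltxx.
Qed.

Lemma MA : M *m A = B.
Proof. by rewrite /Ah mulmxA mulmxV ?M_unit // mul1mx. Qed.

Lemma eig_pos (r : R) (x : 'cV[R]_m) : x != 0 -> A *m x = r *: x -> 0 < r.
Proof.
move=> xn0 Ax.
have E : B *m x = r *: (M *m x) by rewrite -MA -mulmxA Ax scalemxAr.
have := qB_pos xn0; rewrite E -scalemxAr mxE.
by rewrite pmulr_lgt0 // qM_pos.
Qed.

Lemma Meig_pos (d : R) (x : 'cV[R]_m) : x != 0 -> M *m x = d *: x -> 0 < d.
Proof.
move=> xn0 Mx; have := qM_pos xn0; rewrite Mx -scalemxAr mxE.
by rewrite pmulr_lgt0 // sq_pos.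
Qed.

End FEM2.
Section LinAlg.

Lemma cplxE (R : realType) : @cplx R = real_complex R.
Proof. by []. Qed.

Lemma real_eig (R : realType) m (X : 'M[R]_m) (lam : R) (v : 'cV[R[i]]_m) :
  v != 0 -> map_mx (real_complex R) X *m v = real_complex R lam *: v ->
  exists2 w : 'cV[R]_m, w != 0 & X *m w = lam *: w.
Proof.
move=> vn0 Xv.
have ev : eigenvalue (map_mx (real_complex R) X^T) (real_complex R lam).
  apply/eigenvalueP; exists v^T.
    by rewrite -map_trmx -trmx_mul Xv linearZ.
  by apply: contra vn0 => /eqP/(congr1 trmx); rewrite trmxK trmx0 => ->.
rewrite eigenvalue_map in ev; move/eigenvalueP: ev => [w wX wn0].
exists w^T.
  by apply: contra wn0 => /eqP/(congr1 trmx); rewrite trmxK trmx0 => ->.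
by have := congr1 trmx wX; rewrite trmx_mul trmxK linearZ.
Qed.

Lemma tri_ker (F : fieldType) m (T : 'M[F]_m) (v : 'cV[F]_m) :
  (forall i j : 'I_m, (i.+1 < j)%N -> T i j = 0) ->
  (forall i j : 'I_m, j = i.+1 :> nat -> T i j != 0) ->
  T *m v = 0 -> (forall i : 'I_m, val i = 0%N -> v i 0 = 0) -> v = 0.
Proof.
move=> Tz Tnz Tv v0.
have Y : forall k, forall i : 'I_m, (i <= k)%N -> v i 0 = 0.
  elim=> [|k IH] i hi.
    by apply: v0; move: hi; rewrite leqn0 => /eqP.
  case: (leqP i k) => hik; first exact: IH.
  have ei : val i = k.+1 by apply/eqP; rewrite eqn_leq hi hik.
  have hk : (k < m)%N := ltn_trans hik (ltn_ord i).
  pose ik := Ordinal hk.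
  move/matrixP: (Tv) => /(_ ik 0); rewrite !mxE (bigD1 i) //= big1.
    move=> /eqP; rewrite addr0 mulf_eq0 (negbTE (Tnz ik i ei)) /=.
    by move/eqP.
  move=> j hj; case: (leqP j k) => hjk; first by rewrite IH // mulr0.
  rewrite Tz ?mul0r //= ltn_neqAle hjk andbT -ei.
  by move: hj; rewrite eq_sym -(inj_eq val_inj).
by apply/matrixP => i j; rewrite ord1 mxE (Y i i).
Qed.

Lemma col_eig (F : fieldType) m (X Q : 'M[F]_m) (d : 'rV[F]_m) :
  Q \in unitmx -> X *m Q = Q *m diag_mx d ->
  forall i, col i Q != 0 /\ X *m col i Q = d 0 i *: col i Q.
Proof.
move=> Qu XQ i; rewrite colE; split.
  apply/negP => /eqP Q0.
  have : delta_mx i 0 = 0 :> 'cV[F]_m by rewrite -[delta_mx i 0](mulKmx Qu) Q0 mulmx0.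
  move/matrixP/(_ i 0); rewrite !mxE !eqxx /= => /eqP; by rewrite oner_eq0.
rewrite mulmxA XQ -mulmxA scalemxAr; congr (_ *m _).
apply/matrixP => k l; rewrite mul_diag_mx !mxE ord1.
by case: eqP => [->|]; rewrite ?mulr1 ?mulr0 //=.
Qed.

Lemma char_poly_conj (F : fieldType) m (G D : 'M[F]_m) :
  G \in unitmx -> char_poly (invmx G *m D *m G) = char_poly D.
Proof.
move=> Gu; rewrite /char_poly /char_poly_mx !map_mxM.
set Gi := map_mx polyC (invmx G); set G' := map_mx polyC G.
have GG : Gi *m G' = 1%:M by rewrite -map_mxM mulVmx // map_mx1.
have EX : ('X%:M : 'M[{poly F}]_m) = Gi *m 'X%:M *m G'.
  by rewrite scalar_mxC -mulmxA GG mulmx1.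
rewrite [in LHS]EX -mulmxBl -mulmxBr !det_mulmx mulrAC -det_mulmx GG det1 mul1r.
reflexivity.
Qed.

Lemma inv_uniq (F : comUnitRingType) m (X Y : 'M[F]_m) : X *m Y = 1%:M -> invmx X = Y.
Proof.
move=> XY; have [Xu _] := mulmx1_unit XY.
by rewrite -[invmx X]mulmx1 -XY mulmxA mulVmx // mul1mx.
Qed.

End LinAlg.
Section Spec.
Local Open Scope sesquilinear_scope.
Variables (R : realType) (m : nat) (a : R -> R).
Hypothesis apos : forall x : R, 0 <= x <= 1 -> 0 <= a x.

Local Notation cp := (real_complex R).
Local Notation B := (Kh R m + Lh m a).
Local Notation M := (Mh R m).
Local Notation A := (Ah m a).

Lemma tstar_real (X : 'M[R]_m) : X^T = X -> (map_mx cp X)^t* = map_mx cp X.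
Proof.
move=> XT; apply/matrixP => i j; rewrite !mxE conj_Creal; last first.
  by apply/complex_realP; eexists.
by rewrite -[in RHS]XT mxE.
Qed.

Lemma herm_of (X : 'M[R[i]]_m) : X^t* = X -> X \is hermsymmx.
Proof. by move=> XT; apply/is_hermitianmxP; rewrite expr0 scale1r XT. Qed.

Lemma conjP (P X Y : 'M[R[i]]_m) : P \in unitmx ->
  (invmx P *m X *m P) *m (invmx P *m Y *m P) = invmx P *m (X *m Y) *m P.
Proof. by move=> Pu; rewrite -!mulmxA (mulmxA P) mulmxV // mul1mx. Qed.

Lemma tstar_conjP (P X : 'M[R[i]]_m) : P \is unitarymx -> X^t* = X ->
  (invmx P *m X *m P)^t* = invmx P *m X *m P.
Proof.
move=> Pu XT; rewrite !trmx_mul !map_mxM XT.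
rewrite [in LHS]invmx_unitary // trmxCK -invmx_unitary // -mulmxA.
by rewrite mulmxA.
Qed.

Lemma spectral_main : exists (r : 'I_m -> R) (G : 'M[R[i]]_m),
  [/\ G \in unitmx, (forall i, map_mx cp A *m col i G = cp (r i) *: col i G),
      (forall i, col i G != 0) &
      map_poly cp (char_poly A) = \prod_i ('X - (cp (r i))%:P)].
Proof.
pose Mc := map_mx cp M; pose Bc := map_mx cp B.
have McE : map_mx cp M = Mc by [].
have BcE : map_mx cp B = Bc by [].
clearbody Mc Bc.
have McT : Mc^t* = Mc by rewrite -McE; apply: tstar_real; exact: M_sym.
have BcT : Bc^t* = Bc by rewrite -BcE; apply: tstar_real; exact: B_sym.
pose P := spectralmx Mc; pose dd := spectral_diag Mc.
have /orthomx_spectralP HMc := hermitian_normalmx (herm_of McT).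
have ddR := hermitian_spectral_diag_real (herm_of McT).
have Pu : P \is unitarymx := spectral_unitarymx Mc.
have Pun : P \in unitmx := unitarymx_unit Pu.
pose del i := complex.Re (dd 0 i).
have ddE : forall i, dd 0 i = cp (del i).
  by move=> i; rewrite RRe_real // (mxOverP ddR).
have delpos : forall i, 0 < del i.
  move=> i.
  have [||v0 Mv] := @col_eig _ _ Mc (invmx P) dd _ _ i.
  - by rewrite unitmx_inv.
  - by rewrite {1}HMc mulmxK.
  rewrite ddE -McE in Mv; have [w wn0 Mw] := real_eig v0 Mv.
  exact: (Meig_pos wn0 Mw).
pose sq i := Num.sqrt (del i).
have sqn0 : forall i, sq i != 0 by move=> i; rewrite gt_eqF // sqrtr_gt0.
pose D1 := diag_mx (\row_i cp (sq i)).
pose D2 := diag_mx (\row_i cp (sq i)^-1).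
have D11 : D1 *m D1 = diag_mx dd.
  rewrite mulmx_diag; congr diag_mx; apply/rowP => j; rewrite !mxE ddE -rmorphM.
  by rewrite -expr2 sqr_sqrtr // ltW.
have D21 : D2 *m D1 = 1%:M.
  rewrite mulmx_diag -diag_const_mx; congr diag_mx; apply/rowP => j.
  by rewrite !mxE -rmorphM mulVf ?rmorph1.
have D12 : D1 *m D2 = 1%:M by rewrite diag_mxC.
pose S := invmx P *m D1 *m P; pose Si := invmx P *m D2 *m P.
have SS : S *m S = Mc by rewrite (conjP _ _ Pun) D11 -HMc.
have SiS : Si *m S = 1%:M by rewrite (conjP _ _ Pun) D21 mulmx1 (mulVmx Pun).
have SSi : S *m Si = 1%:M by rewrite (conjP _ _ Pun) D12 mulmx1 (mulVmx Pun).
have iMc : invmx Mc = Si *m Si.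
  by apply: inv_uniq; rewrite -SS -(mulmxA S S) (mulmxA S Si Si) SSi mul1mx SSi.
have SiT : Si^t* = Si.
  apply: tstar_conjP => //; rewrite /D2 tr_diag_mx map_diag_mx; congr diag_mx.
  apply/rowP => j; rewrite !mxE.
  by apply: conj_Creal; apply/complex_realP; eexists.
pose H := Si *m Bc *m Si.
have HE : H = Si *m Bc *m Si by [].
clearbody H S Si.
have HT : H^t* = H.
  by timeout 20 rewrite HE trmx_mul trmx_mul map_mxM map_mxM SiT BcT mulmxA.
pose Q := spectralmx H; pose e := spectral_diag H.
have /orthomx_spectralP HH := hermitian_normalmx (herm_of HT).
have eR := hermitian_spectral_diag_real (herm_of HT).
have Qun : Q \in unitmx := unitarymx_unit (spectral_unitarymx H).
pose G := Q *m S.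
have GG : G *m (Si *m invmx Q) = 1%:M.
  by timeout 20 rewrite /G -mulmxA (mulmxA S) SSi mul1mx (mulmxV Qun).
have iG : invmx G = Si *m invmx Q := inv_uniq GG.
have Gun : G \in unitmx by have [] := mulmx1_unit GG.
have iGun : invmx G \in unitmx by rewrite unitmx_inv; exact: Gun.
have Ac : map_mx cp A = invmx G *m diag_mx e *m G.
  timeout 20 rewrite /Ah map_mxM map_invmx McE BcE iMc iG /G.
  have -> : Si *m Si *m Bc = Si *m H *m S.
    by timeout 20 rewrite HE !mulmxA -[Si *m Si *m Bc *m Si *m S]mulmxA SiS mulmx1.
  by timeout 20 rewrite {1}HH !mulmxA.
have AcG : map_mx cp A *m invmx G = invmx G *m diag_mx e.
  by rewrite Ac (mulmxK Gun).
pose r i := complex.Re (e 0 i).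
have eE : forall i, e 0 i = cp (r i).
  by move=> i; rewrite (RRe_real (mxOverP eR 0 i)).
exists r, (invmx G); split.
- exact: iGun.
- move=> i; rewrite -eE.
  by have [_ ->] := col_eig iGun AcG i.
- move=> i.
  by have [-> _] := col_eig iGun AcG i.
timeout 20 rewrite map_char_poly Ac (char_poly_conj _ Gun) char_poly_trig; last exact: diag_mx_is_trig.
by apply: eq_bigr => i _; rewrite mxE eqxx mulr1n eE.
Qed.

End Spec.
Section Fin.
Variables (R : realType) (m : nat) (a : R -> R).
Hypothesis apos : forall x : R, 0 <= x <= 1 -> 0 <= a x.

Local Notation cp := (real_complex R).
Local Notation B := (Kh R m + Lh m a).
Local Notation M := (Mh R m).
Local Notation A := (Ah m a).

Definition mf (X : 'M[R]_m) (u v : 'cV[R]_m) : R := (u^T *m (X *m v)) 0 0.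

Lemma mf_sym (X : 'M[R]_m) u v : X^T = X -> mf X u v = mf X v u.
Proof.
move=> XT; rewrite /mf.
transitivity ((u^T *m X *m v)^T 0 0); first by rewrite [RHS]mxE mulmxA.
by rewrite !trmx_mul trmxK XT.
Qed.

Lemma mfZ (X : 'M[R]_m) (s t : R) u v : mf X (s *: u) (t *: v) = s * t * mf X u v.
Proof.
by rewrite /mf linearZ /= -scalemxAl -scalemxAr -scalemxAr !mxE mulrA.
Qed.

Lemma eig_simple (lam : R) (i0 : 'I_m) (u v : 'cV[R[i]]_m) : val i0 = 0%N ->
  0 < lam -> u != 0 ->
  map_mx cp A *m u = cp lam *: u -> map_mx cp A *m v = cp lam *: v ->
  u i0 0 != 0 /\ v i0 0 *: u = u i0 0 *: v.
Proof.
move=> h0 lpos un0 Au Av.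
pose T := map_mx cp (B - lam *: M).
have TE : T = map_mx cp B - cp lam *: map_mx cp M.
  by apply/matrixP => i j; rewrite !mxE rmorphB rmorphM.
have Tw : forall w : 'cV[R[i]]_m, map_mx cp A *m w = cp lam *: w -> T *m w = 0.
  move=> w Aw; rewrite TE mulmxBl -scalemxAl.
  rewrite -(@MA R m a) map_mxM -mulmxA Aw -scalemxAr.
  by rewrite subrr.
have hh := h_gt0 R m.
have Tz : forall i j : 'I_m, (i.+1 < j)%N -> T i j = 0.
  move=> i j hij; rewrite !mxE.
  have -> : (i == j) = false.
    by apply/negbTE; rewrite -(inj_eq val_inj) /= neq_ltn (ltn_trans (ltnSn _) hij).
  have -> : Pilot.Defs.adjacent i j = false.
    by rewrite /Pilot.Defs.adjacent (ltn_eqF hij) (gtn_eqF (ltnW (ltn_trans (ltnSn _) hij) : (i < j.+1)%N)).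
  by rewrite !mulr0 !addr0 subrr rmorph0.
have Tnz : forall i j : 'I_m, j = i.+1 :> nat -> T i j != 0.
  move=> i j hij; rewrite !mxE.
  have -> : (i == j) = false.
    by apply/negbTE; rewrite -(inj_eq val_inj) /= hij neq_ltn ltnSn.
  have -> : Pilot.Defs.adjacent i j = true.
    by rewrite /Pilot.Defs.adjacent hij eqxx.
  rewrite fmorph_eq0 addr0 mulrN1 mulr1 lt_eqF // subr_lt0.
  apply: (lt_le_trans (y := 0)); first by rewrite oppr_lt0 invr_gt0.
  apply: mulr_ge0; first exact: ltW.
  by rewrite divr_ge0 ?ler0n // ltW.
have kerP : forall w : 'cV[R[i]]_m, map_mx cp A *m w = cp lam *: w -> w i0 0 = 0 -> w = 0.
  move=> w Aw w0; apply: (tri_ker Tz Tnz (Tw w Aw)) => i hi.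
  by have -> : i = i0 by apply: val_inj; rewrite /= hi h0.
have u0 : u i0 0 != 0 by apply: contra un0 => /eqP /(kerP u Au) ->.
split => //.
apply/eqP; rewrite -subr_eq0; apply/eqP; apply: kerP.
  by rewrite mulmxBr -!scalemxAr Au Av !scalerA scalerBr !scalerA ![_ * cp lam]mulrC.
by rewrite !mxE mulrC subrr.
Qed.

Lemma mdot_toC (u v : 'cV[R]_m) : Mdot (toC u) (toC v) = cp (mf M v u).
Proof.
rewrite /Mdot /cdot /toC /mf cplxE -map_mxM [in RHS]mxE rmorph_sum.
apply: eq_bigr => j _; by rewrite !mxE conjc_real -rmorphM mulrC.
Qed.

End Fin.
Lemma mfB (R : realType) (m : nat) (a : R -> R) (u v : 'cV[R]_m) (s : R) :
  Ah m a *m v = s *: v -> mf (Kh R m + Lh m a) u v = s * mf (Mh R m) u v.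
Proof.
move=> Av; rewrite /mf -(MA m a) -mulmxA Av -scalemxAr -scalemxAr mxE.
done.
Qed.

Theorem lemma1 (R : realType) (a : R -> R) (N : nat) :
  measurable_fun (`[0%R, 1%R] : set R) a ->
  (exists C : R, forall x : R, 0 <= x <= 1 -> `|a x| <= C) ->
  (forall x : R, 0 <= x <= 1 -> 0 <= a x) ->
  (1 <= N)%N ->
  exists (mu : 'I_N -> R) (Psi : 'I_N -> 'cV[R]_N),
    [/\ injective mu /\ char_poly (@Ah R N a) = \prod_(n < N) ('X - (mu n)%:P),
        (forall n, 0 < mu n),
        (forall n, @Ah R N a *m Psi n = mu n *: Psi n),
        (forall n m, @Mdot R N (@toC R N (Psi n)) (@toC R N (Psi m)) = (n == m)%:R) &
        \rank (\matrix_(i < N, j < N) cplx (Psi j i 0)) = N].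
Proof.
move=> _ _ apos hN.
case: N hN => [//|n] _.
have [r [G [Gun AG Gn0 CP]]] := @spectral_main R n.+1 a.
have W : forall i : 'I_n.+1, exists w : 'cV[R]_n.+1, w != 0 /\ Ah n.+1 a *m w = r i *: w.
  by move=> i; have [w wn0 Aw] := real_eig (Gn0 i) (AG i); exists w.
have [w Hw] := fin_all_exists W.
have rpos : forall i, 0 < r i.
  by move=> i; have [wn0 Aw] := Hw i; exact: (eig_pos apos wn0 Aw).
have rinj : injective r.
  move=> i j rij; apply/eqP; apply: contraT => ij.
  have Aj : map_mx (real_complex R) (Ah n.+1 a) *m col j G = real_complex R (r i) *: col j G.
    by rewrite rij; exact: AG j.
  have [u0 E] := @eig_simple R n.+1 a (r i) ord0 (col i G) (col j G) erefl (rpos i) (Gn0 i) (AG i) Aj.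
  have : G *m ((col j G) ord0 0 *: (delta_mx i 0 : 'cV_n.+1) - (col i G) ord0 0 *: (delta_mx j 0 : 'cV_n.+1)) = 0.
    by rewrite mulmxBr -!scalemxAr -!colE E subrr.
  move/(congr1 (mulmx (invmx G))); rewrite (mulKmx Gun) mulmx0 => /matrixP/(_ j 0).
  rewrite !mxE !eqxx /= eq_sym (negbTE ij) mulr0 sub0r mulr1 => /eqP.
  by rewrite oppr_eq0; move: u0; rewrite mxE => /negbTE ->.
pose q i := mf (Mh R n.+1) (w i) (w i).
have qpos : forall i, 0 < q i by move=> i; exact: qM_pos (Hw i).1.
pose Psi i := (Num.sqrt (q i))^-1 *: w i.
have orth : forall i j, i != j -> mf (Mh R n.+1) (w i) (w j) = 0.
  move=> i j ij.
  have E1 := mfB (w i) (Hw j).2.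
  have E2 := mfB (w j) (Hw i).2.
  rewrite (mf_sym _ _ (@B_sym R n.+1 a)) E2 (mf_sym _ _ (@M_sym R n.+1)) in E1.
  move/eqP: E1; rewrite -subr_eq0 -mulrBl mulf_eq0 subr_eq0 => /orP [/eqP rij|/eqP //].
  by move: ij; rewrite (rinj _ _ rij) eqxx.
have ortho : forall i j, mf (Mh R n.+1) (Psi i) (Psi j) = (i == j)%:R.
  move=> i j; rewrite /Psi mfZ; case: (eqVneq i j) => [<-|ij].
    rewrite -/(q i) -invfM -expr2 sqr_sqrtr ?ltW // mulVf //.
    by rewrite gt_eqF // qpos.
  by rewrite orth // mulr0.
exists r, Psi; split.
- split => //.
  apply: (map_poly_inj (real_complex R)); rewrite CP map_prod_XsubC.
  done.
- exact: rpos.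
- move=> i; rewrite /Psi -scalemxAr (Hw i).2 !scalerA mulrC.
  done.
- by move=> i j; rewrite mdot_toC ortho eq_sym rmorph_nat.
have -> : \matrix_(i < n.+1, j < n.+1) cplx (Psi j i 0) =
          map_mx (real_complex R) (\matrix_(i < n.+1, j < n.+1) Psi j i 0).
  by apply/matrixP => k l; rewrite !mxE.
rewrite mxrank_map.
set P := \matrix_(i < n.+1, j < n.+1) Psi j i 0.
have PP : (P^T *m Mh R n.+1) *m P = 1%:M.
  apply/matrixP => k l; rewrite [RHS]mxE -ortho -mulmxA /mf !mxE.
  apply: eq_bigr => j _; rewrite /P !mxE; congr (_ * _); apply: eq_bigr => t _.
  by rewrite !mxE.
have [_ Pu] := mulmx1_unit PP.
exact: mxrank_unit Pu.
Qed.
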